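(* Let $W$ and $A$ be finite sets and $V\subseteq W$. Let $\mathcal{P}\subseteq\Delta_W(V)$ be a convex set. Let $\mathcal{G}\subseteq\Delta_{W,A}$ satisfy $\mathcal{G}|_V=\prod_{w\in V}\mathcal{G}_w\subseteq\Delta_{V,A}$, where $\mathcal{G}_w\subseteq\Delta_A$ is a convex set for all $w\in V$. Then $\mathcal{P}\ast\mathcal{G}\subseteq\Delta_{W\times A}$ is convex.
   Context: $\Delta_X$ is the probability simplex on a finite set $X$; $\Delta_{X,Y}=\prod_{x\in X}\Delta_Y$ is the set of Markov kernels $g(y|x)$. For $\mathcal{P}\subseteq\Delta_W$ and $\mathcal{G}\subseteq\Delta_{W,A}$, $\mathcal{P}\ast\mathcal{G}=\{q(w,a)=p(w)g(a|w)\in\Delta_{W\times A}\colon p\in\mathcal{P},g\in\mathcal{G}\}$. For $V\subseteq W$, $\Delta_W(V)=\{p\in\Delta_W\colon \{w\colon p(w)>0\}\subseteq V\}$. For $\mathcal{G}\subseteq\Delta_{W,A}$, $\mathcal{G}|_V=\{h\in\Delta_{V,A}\colon \text{there is } g\in\mathcal{G} \text{ with } h(\cdot|w)=g(\cdot|w)\text{ for all }w\in V\}$. *)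

(* Defs.v *)
From HB Require Import structures.
From mathcomp Require Import all_boot all_order all_algebra.
Set Implicit Arguments. Unset Strict Implicit. Unset Printing Implicit Defensive.
Import Order.TTheory GRing.Theory Num.Theory.
Local Open Scope ring_scope.

Section Defs.
Variable R : realFieldType.

Definition is_dist (X : finType) (p : {ffun X -> R}) : Prop :=
  (forall x, 0 <= p x) /\ \sum_(x : X) p x = 1.

Definition is_kernel (X Y : finType) (g : {ffun X -> {ffun Y -> R}}) : Prop :=
  forall x, is_dist (g x).

Definition simplex_on (W : finType) (V : {set W}) (p : {ffun W -> R}) : Prop :=
  is_dist p /\ (forall w, 0 < p w -> w \in V).

Definition convex_set (X : finType) (S : {ffun X -> R} -> Prop) : Prop :=
  forall p q t, S p -> S q -> 0 <= t -> t <= 1 ->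
    S [ffun x => t * p x + (1 - t) * q x].

Definition comp_set (W A : finType) (P : {ffun W -> R} -> Prop)
  (G : {ffun W -> {ffun A -> R}} -> Prop) (q : {ffun (W * A)%type -> R}) : Prop :=
  exists p g, P p /\ G g /\ forall wa : W * A, q wa = p wa.1 * g wa.1 wa.2.

Definition restr_set (W A : finType) (G : {ffun W -> {ffun A -> R}} -> Prop)
  (V : {set W}) (h : {ffun {w : W | w \in V} -> {ffun A -> R}}) : Prop :=
  is_kernel h /\ exists g, G g /\ forall w : {w : W | w \in V}, h w = g (val w).

End Defs.

(* Main.v *)
Require Import Defs.
From mathcomp Require Import all_boot all_order all_algebra.
From mathcomp Require Import ring lra.
Import Order.TTheory GRing.Theory Num.Theory.
Local Open Scope ring_scope.

Theorem proposition7 (R : realFieldType) (W A : finType) (V : {set W})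
  (P : {ffun W -> R} -> Prop) (G : {ffun W -> {ffun A -> R}} -> Prop)
  (Gw : {w : W | w \in V} -> {ffun A -> R} -> Prop)
  (HP : forall p, P p -> simplex_on V p)
  (HPc : convex_set P)
  (HG : forall g, G g -> is_kernel g)
  (HGw : forall w p, Gw w p -> is_dist p)
  (HGwc : forall w, convex_set (Gw w))
  (Hprod : forall h : {ffun {w : W | w \in V} -> {ffun A -> R}},
     @restr_set R W A G V h <-> (forall w, Gw w (h w))) :
  convex_set (comp_set P G).
Proof.
rewrite /convex_set /comp_set => q1 q2 t [p1 [g1 [Pp1 [Gg1 Hq1]]]] [p2 [g2 [Pp2 [Gg2 Hq2]]]] t0 t1.
have Gw1 : forall w, Gw w (g1 (val w)).
  move=> w; have := (Hprod [ffun w => g1 (val w)]).1; rewrite -[X in Gw w X](ffunE (fun w => g1 (val w))).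
  apply.
  split; first by move=> w'; rewrite ffunE; exact: HG.
  by exists g1; split => // w'; rewrite ffunE.
have Gw2 : forall w, Gw w (g2 (val w)).
  move=> w; have := (Hprod [ffun w => g2 (val w)]).1; rewrite -[X in Gw w X](ffunE (fun w => g2 (val w))).
  apply.
  split; first by move=> w'; rewrite ffunE; exact: HG.
  by exists g2; split => // w'; rewrite ffunE.
set p := [ffun x => t * p1 x + (1 - t) * p2 x].
set h := [ffun w : {w : W | w \in V} => if p (val w) == 0 then g1 (val w)
   else [ffun a => (t * p1 (val w) / p (val w)) * g1 (val w) a
        + (1 - t * p1 (val w) / p (val w)) * g2 (val w) a]].
have [[Hk [g [Gg Hg]]] _] : @restr_set R W A G V h /\ True.
  split => //; apply/(Hprod h) => w; rewrite ffunE.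
  case: eqP => Hp; first exact: Gw1.
  have [[n1 _] _] := HP _ Pp1; have [[n2 _] _] := HP _ Pp2.
  have a0 : 0 <= t * p1 (val w) by apply: mulr_ge0.
  have b0 : 0 <= (1 - t) * p2 (val w) by rewrite mulr_ge0 ?subr_ge0.
  have pp : 0 < p (val w).
    rewrite lt_def; apply/andP; split; first by apply/eqP.
    by rewrite ffunE; lra.
  apply: HGwc; [exact: Gw1 | exact: Gw2 | by rewrite divr_ge0 // ltW | ].
  rewrite ler_pdivrMr // mul1r ffunE; lra.
exists p, g; split; first exact: HPc.
split => // [[w a]] /=.
rewrite ffunE Hq1 Hq2 /=.
have [[n1 _] s1] := HP _ Pp1; have [[n2 _] s2] := HP _ Pp2.
have a0 : 0 <= t * p1 w by apply: mulr_ge0.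
have b0 : 0 <= (1 - t) * p2 w by rewrite mulr_ge0 ?subr_ge0.
case: (boolP (w \in V)) => wV.
  have := Hg (exist _ w wV); rewrite ffunE /= => <-.
  case: eqP => Hp.
    rewrite Hp mul0r.
    have e1 : t * p1 w = 0 by move: Hp; rewrite ffunE; lra.
    have e2 : (1 - t) * p2 w = 0 by move: Hp; rewrite ffunE; lra.
    by rewrite !mulrA e1 e2 !mul0r addr0.
  rewrite ffunE.
  have : p w = t * p1 w + (1 - t) * p2 w by rewrite ffunE.
  move=> E; move: Hp; rewrite E => Hp.
  have Hp' : t * p1 w + (1 - t) * p2 w != 0 by apply/eqP.
  field; exact: Hp'.
have z1 : p1 w = 0.
  apply/eqP; rewrite eq_le n1 andbT; rewrite leNgt; apply/negP => /s1; by rewrite (negbTE wV).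
have z2 : p2 w = 0.
  apply/eqP; rewrite eq_le n2 andbT; rewrite leNgt; apply/negP => /s2; by rewrite (negbTE wV).
by rewrite /p ffunE z1 z2 !mul0r !mulr0 addr0 mul0r.
Qed.
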